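(* Let $K$ be either an $N$-gon or a star-like tree, with $N$ vertices, and let $z\in\mathbb{R}^N$ be such that the persistence diagram $\mathrm{PH}_0(z)=\{(p_m^b,p_m^d)\}_{m=1}^M$ is typical. Then there is a typical point $z'\in\mathbb{R}^N$ with $\mathrm{PH}_0(z')=\mathrm{PH}_0(z)$.
   Context: The $N$-gon has vertices $\mathbb{Z}/N$ and edges $[i,i+1]$. A star-like tree is a tree with a central vertex of degree $n$ which is the union of $n$ paths (branches) of length at least $2$ meeting only at the central vertex. Vertices of $K$ are labelled $1,\dots,N$, and $z\in\mathbb{R}^N$ is viewed as a function on vertices extended to edges by the maximum over endpoints. $K_r(z)$ is the subcomplex of vertices $i$ with $z_i\le r$ and edges $[i,j]$ with $\max\{z_i,z_j\}\le r$; $\mathrm{PH}_0(z)$ is the degree-$0$ persistence diagram (multiset of (birth, death) pairs, death possibly $\infty$) of the filtration $r\mapsto K_r(z)$. A persistence diagram is typical if the (finite) coordinates of its points are pairwise distinct; a point $z\in\mathbb{R}^N$ is typical if its coordinates are pairwise distinct. *)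

(* Defs.v *)
From HB Require Import structures.
From mathcomp Require Import all_boot all_order all_algebra.
From mathcomp Require Import reals.
Set Implicit Arguments. Unset Strict Implicit. Unset Printing Implicit Defensive.
Import Order.TTheory GRing.Theory Num.Theory.
Local Open Scope ring_scope.

(* A graph K on the vertex set 'I_N is given by its (symmetric) adjacency
   relation [adj : rel 'I_N]. *)

Definition ngon_adj (N : nat) : rel 'I_N :=
  fun i j => (nat_of_ord j == (i.+1 %% N)%N) || (nat_of_ord i == (j.+1 %% N)%N).

Definition is_ngon (N : nat) (adj : rel 'I_N) : Prop :=
  (3 <= N)%N /\ adj = @ngon_adj N.

(* Edges of a branch b = [:: v1; ...; vk] attached to the centre c:
   the path c - v1 - v2 - ... - vk (k edges). *)
Definition branch_edges (N : nat) (c : 'I_N) (b : seq 'I_N) : seq ('I_N * 'I_N) :=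
  zip (c :: b) b.

(* Star-like tree: a central vertex c and n >= 1 branches (paths of length
   >= 2, i.e. with >= 2 non-central vertices) meeting only at c, covering all
   vertices; the edges are exactly the edges of the branches. *)
Definition star_like (N : nat) (adj : rel 'I_N) : Prop :=
  exists (c : 'I_N) (bs : seq (seq 'I_N)),
    [/\ (0 < size bs)%N,
        all (fun b => (2 <= size b)%N) bs,
        uniq (c :: flatten bs),
        (forall v : 'I_N, v \in c :: flatten bs) &
        (forall i j : 'I_N, adj i j =
           has (fun b => ((i, j) \in branch_edges c b) || ((j, i) \in branch_edges c b)) bs)].

(* Filtration levels: [Some t, false] is K_t (values <= t), [Some t, true] is
   K_{t^-} = union of K_{t-eps} (values < t), [None, _] is K_infinity = K. *)
Definition in_level (R : realType) (N : nat) (z : 'I_N -> R)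
    (t : option R) (strict : bool) (i : 'I_N) : bool :=
  match t with
  | None => true
  | Some t => if strict then z i < t else z i <= t
  end.

Definition level_rel (R : realType) (N : nat) (adj : rel 'I_N) (z : 'I_N -> R)
    (t : option R) (strict : bool) : rel 'I_N :=
  fun i j => [&& adj i j, in_level z t strict i & in_level z t strict j].

(* Rank of H_0(K_s) -> H_0(K_t) (s <= t): number of connected components of
   K_t containing a vertex of K_s. *)
Definition rk (R : realType) (N : nat) (adj : rel 'I_N) (z : 'I_N -> R)
    (s : R) (ss : bool) (t : option R) (ts : bool) : nat :=
  #|[set [set j | connect (level_rel adj z t ts) i j]
      | i in [set i | in_level z (Some s) ss i]]|.

(* Degree-0 persistence diagram of the sublevel filtration r |-> K_r(z), as a
   multiplicity function (birth b, death d), d = None meaning infinity,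
   via the inclusion-exclusion formula of Cohen-Steiner--Edelsbrunner--Harer. *)
Definition PH0 (R : realType) (N : nat) (adj : rel 'I_N) (z : 'I_N -> R)
    (b : R) (d : option R) : int :=
  match d with
  | None => (rk adj z b false None false)%:Z - (rk adj z b true None false)%:Z
  | Some d =>
      if b < d then
        (rk adj z b false (Some d) true)%:Z - (rk adj z b true (Some d) true)%:Z
        - (rk adj z b false (Some d) false)%:Z + (rk adj z b true (Some d) false)%:Z
      else 0
  end.

Definition coords (R : realType) (b : R) (d : option R) : seq R :=
  b :: (if d is Some x then [:: x] else [::]).

Definition typical_dgm (R : realType) (D : R -> option R -> int) : Prop :=
  [/\ (forall b d, D b d <= 1),
      (forall b d, 0 < D b d -> uniq (coords b d)) &
      (forall b d b' d', 0 < D b d -> 0 < D b' d' -> (b, d) <> (b', d') ->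
         forall x, x \in coords b d -> x \notin coords b' d')].

Definition typical_pt (R : realType) (N : nat) (z : 'I_N -> R) : Prop :=
  injective z.

(* Main.v *)
Require Import Defs.
From HB Require Import structures.
From mathcomp Require Import all_boot all_order all_algebra.
From mathcomp Require Import reals lra zify.
From Stdlib Require Import FunctionalExtensionality Classical.
Set Implicit Arguments. Unset Strict Implicit. Unset Printing Implicit Defensive.
Import Order.TTheory GRing.Theory Num.Theory.

Section Graph.
Variable T : finType.

Definition comp (e : rel T) (i : T) : {set T} := [set j | connect e i j].
Definition restr (e : rel T) (C : {set T}) : rel T :=
  [rel a b | [&& e a b, a \in C & b \in C]].

Lemma restrE (e : rel T) C a b : restr e C a b = [&& e a b, a \in C & b \in C].
Proof. by []. Qed.

Lemma conn_map (T' : finType) (e : rel T) (e' : rel T') (f : T -> T') :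
  (forall x y, e x y -> connect e' (f x) (f y)) ->
  forall x y, connect e x y -> connect e' (f x) (f y).
Proof.
move=> H x y /connectP [p]; elim: p x => [|a p IH] x /=.
  by move=> _ ->; exact: connect0.
move=> /andP [exa pa] Hy; exact: connect_trans (H _ _ exa) (IH _ pa Hy).
Qed.

Lemma conn_closed_restr (e : rel T) (C : {set T}) :
  (forall a b, e a b -> a \in C -> b \in C) ->
  forall x y, x \in C -> connect e x y -> connect (restr e C) x y.
Proof.
move=> HC x y xC /connectP [p]; elim: p x xC => [|a p IH] x xC /=.
  by move=> _ ->; exact: connect0.
move=> /andP [exa pa] Hy.
have aC := HC _ _ exa xC.
apply: connect_trans (IH _ aC pa Hy); apply: connect1; exact/and3P.
Qed.

Lemma edge_out (e : rel T) (P : pred T) r x :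
  connect e r x -> P r -> ~~ P x -> exists a b, [/\ P a, ~~ P b & e a b].
Proof.
move=> /connectP [p]; elim: p r => [|a p IH] r /=.
  by move=> _ -> ->.
move=> /andP [era pa] Hx Pr nPx.
case Pa: (P a); first exact: IH pa Hx Pa nPx.
by exists r, a; rewrite Pa.
Qed.

Lemma restr_sub (e : rel T) (C D : {set T}) : C \subset D ->
  forall x y, connect (restr e C) x y -> connect (restr e D) x y.
Proof.
move=> CD; apply: connect_sub => a b; rewrite restrE => /and3P [eab aC bC].
by apply: connect1; rewrite restrE eab (subsetP CD _ aC) (subsetP CD _ bC).
Qed.

Lemma comp_eq (e : rel T) : symmetric e -> forall i j,
  (comp e i == comp e j) = connect e i j.
Proof.
move=> se i j; have cs := sym_connect_sym se.
apply/eqP/idP => [H | H].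
  have : j \in comp e j by rewrite inE connect0.
  by rewrite -H inE.
apply/setP => k; rewrite !inE; apply/idP/idP => Hk.
  by apply: connect_trans Hk; rewrite cs.
exact: connect_trans H Hk.
Qed.

Lemma ma (e : rel T) (se : symmetric e) (Q : {set T}) r : forall n (C : {set T}),
  #|Q :\: C| = n.+1 -> C \subset Q -> r \in C ->
  (forall x, x \in C -> connect (restr e C) r x) ->
  (forall x, x \in Q -> connect (restr e Q) r x) ->
  exists w, [/\ w \in Q :\: C,
    (forall x, x \in Q :\ w -> connect (restr e (Q :\ w)) r x) &
    exists2 n, n \in Q :\ w & e w n].
Proof.
elim => [|n IH] C cardQC CQ rC HC HQ.
- have [w Hw] := cards1P (introT eqP cardQC).
  have wQC : w \in Q :\: C by rewrite Hw set11.
  have QwC : Q :\ w = C.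
    apply/setP => y; rewrite !inE; apply/idP/idP.
      case/andP => yw yQ; apply/negPn/negP => yC.
      have : y \in Q :\: C by rewrite inE yC yQ.
      by rewrite Hw inE (negPf yw).
    move=> yC; rewrite (subsetP CQ _ yC) andbT; apply/eqP => Ey.
    by move: wQC; rewrite -Ey inE yC.
  exists w; split => //; first by rewrite QwC.
  move: wQC; rewrite inE => /andP [wC wQ].
  have [a [b [aC bC eab]]] :=
    edge_out (P := fun y => y \in C) (HQ _ wQ) rC wC.
  move: eab; rewrite restrE => /and3P [eab aQ bQ].
  have bw : b = w.
    have : b \in Q :\: C by rewrite inE bC bQ.
    by rewrite Hw inE => /eqP.
  exists a; first by rewrite QwC.
  by rewrite -bw se.
- have : 0 < #|Q :\: C| by rewrite cardQC.
  case/card_gt0P => x; rewrite inE => /andP [xC xQ].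
  have [a [b [aC bC eab]]] :=
    edge_out (P := fun y => y \in C) (HQ _ xQ) rC xC.
  move: eab; rewrite restrE => /and3P [eab aQ bQ].
  have [|||||w [w1 w2 w3]] := IH (b |: C).
  + move: cardQC; rewrite (cardsD1 b (Q :\: C)) inE bC bQ /= add1n => [[<-]].
    by apply: eq_card => y; rewrite !inE negb_or andbA.
  + by rewrite subUset sub1set bQ CQ.
  + by rewrite inE rC orbT.
  + move=> y; rewrite !inE => /orP [/eqP -> | yC].
      apply: connect_trans (restr_sub (subsetUr _ _) (HC _ aC)) _.
      by apply: connect1; rewrite restrE eab !inE aC eqxx orbT.
    have := HC _ yC; apply: restr_sub; exact: subsetUr.
  + exact: HQ.
  exists w; split => //.
  by move: w1; rewrite !inE negb_or => /andP [/andP [_ ->] ->].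
Qed.

Lemma card_ker (U V : finType) (f : T -> U) (g : T -> V) (A : {set T})
    (K : {set V}) :
  {in A &, forall i j, g i = g j -> f i = f j} -> K \subset g @: A ->
  (forall k, k \in K -> exists a b, [/\ a \in A, b \in A, g a \notin K,
       g b = k & f a = f b]) ->
  #|f @: A| + #|K| <= #|g @: A|.
Proof.
move=> Hker KA HK.
case: (set_0Vmem A) => [A0 | [a0 a0A]].
  have K0 : K = set0 by apply/eqP; rewrite -subset0; rewrite A0 imset0 in KA.
  by rewrite K0 A0 !imset0 cards0.
pose rep k := odflt a0 [pick i in A | g i == k].
have repP : forall k, k \in g @: A -> rep k \in A /\ g (rep k) = k.
  move=> k /imsetP [i iA ->]; rewrite /rep.
  case: pickP => [j /andP [jA /eqP ->] | /(_ i)]; first by [].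
  by rewrite iA eqxx.
have sub : f @: A \subset (fun k => f (rep k)) @: (g @: A :\: K).
  apply/subsetP => y /imsetP [i iA ->].
  have giA : g i \in g @: A by apply: imset_f.
  case: (boolP (g i \in K)) => giK.
    have [a [b [aA bA gaK gb fab]]] := HK _ giK.
    have gaA : g a \in g @: A by apply: imset_f.
    apply/imsetP; exists (g a); first by rewrite inE gaK gaA.
    have [rA rg] := repP _ gaA.
    rewrite (Hker _ _ iA bA (esym gb)) -fab.
    exact: Hker aA rA (esym rg).
  apply/imsetP; exists (g i); first by rewrite inE giK giA.
  have [rA rg] := repP _ giA.
  exact: Hker iA rA (esym rg).
have := subset_leq_card sub.
move/leq_trans/(_ (leq_imset_card _ _)).
by rewrite cardsD (setIidPr KA) leq_subRL ?subset_leq_card // addnC.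
Qed.

Lemma card_ker0 (U V : finType) (f : T -> U) (g : T -> V) (A : {set T}) :
  {in A &, forall i j, g i = g j -> f i = f j} -> #|f @: A| <= #|g @: A|.
Proof.
move=> H; have := @card_ker _ _ f g A set0 H (sub0set _).
rewrite cards0 addn0; apply => k; by rewrite inE.
Qed.

End Graph.

Section Real.
Variables (R : realType) (N : nat) (adj : rel 'I_N).
Hypothesis adjS : symmetric adj.
Local Open Scope ring_scope.

Definition upd (z : 'I_N -> R) (v : 'I_N) (c : R) : 'I_N -> R :=
  fun i => if i == v then c else z i.

Lemma rkE (z : 'I_N -> R) (s : R) ss t ts : rk adj z s ss t ts =
  #|[set comp (level_rel adj z t ts) i | i in [set i | in_level z (Some s) ss i]]|.
Proof. by []. Qed.

Lemma lrel_sym (z : 'I_N -> R) t ts : symmetric (level_rel adj z t ts).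
Proof.
move=> i j; rewrite /level_rel adjS.
by case: (in_level z t ts i); case: (in_level z t ts j); rewrite ?andbF ?andbT.
Qed.

Lemma cnt_add (e : rel 'I_N) (S : {set 'I_N}) v n : symmetric e ->
  n \in S -> connect e v n -> #|comp e @: (v |: S)| = #|comp e @: S|.
Proof.
move=> se nS cvn; rewrite imsetU1.
have -> : comp e v = comp e n by apply/eqP; rewrite comp_eq.
by rewrite (setUidPr _) // sub1set imset_f.
Qed.

Lemma cnt_ext (e e' : rel 'I_N) (S : {set 'I_N}) : symmetric e -> symmetric e' ->
  {in S &, forall i j, connect e i j = connect e' i j} ->
  #|comp e @: S| = #|comp e' @: S|.
Proof.
move=> se se' H; apply/eqP; rewrite eqn_leq; apply/andP; split; apply: card_ker0.
  by move=> i j iS jS /eqP; rewrite comp_eq // -H // -comp_eq // => /eqP.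
by move=> i j iS jS /eqP; rewrite comp_eq // H // -comp_eq // => /eqP.
Qed.

Lemma cnt_eqrel (e e' : rel 'I_N) (S : {set 'I_N}) : e =2 e' ->
  comp e @: S = comp e' @: S.
Proof.
move=> H; apply: eq_imset => i; apply/setP => j; by rewrite !inE (eq_connect H).
Qed.

Section Move.
Variables (z : 'I_N -> R) (v : 'I_N) (c' : R).
Hypothesis hc : z v < c'.
Hypothesis gap : forall w, ~~ (z v < z w < c').
Let z' := upd z v c'.

Lemma gapi i : (z i <= z v) || (c' <= z i).
Proof. have := gap i; case: (boolP (z i <= z v)) => //= h1 h2; lra. Qed.

Lemma lev_class t ts :
  (forall i, in_level z t ts i = in_level z' t ts i) \/
  ((forall i, in_level z t ts i = (z i <= z v)) /\
   (forall i, in_level z' t ts i = (z i <= z v) && (i != v))).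
Proof.
case: t => [x|]; last by left.
rewrite /z' /upd /=.
case: ts.
- case: (boolP (x <= z v)) => h1.
    left => i /=; case: eqP => [-> | _] //; apply/idP/idP => h; have hc' := hc; lra.
  case: (boolP (c' < x)) => h2.
    left => i /=; case: eqP => [-> | _] //; apply/idP/idP => h; have hc' := hc; lra.
  right; split => i /=.
    have := gapi i; case/orP => h; apply/idP/idP => h'; lra.
  case: eqP => [-> | _]; first by rewrite ?eqxx ?andbF; apply/negbTE; have hc' := hc; lra.
  rewrite andbT; have := gapi i; case/orP => h; apply/idP/idP => h'; lra.
- case: (boolP (x < z v)) => h1.
    left => i /=; case: eqP => [-> | _] //; apply/idP/idP => h; have hc' := hc; lra.
  case: (boolP (c' <= x)) => h2.
    left => i /=; case: eqP => [-> | _] //; apply/idP/idP => h; have hc' := hc; lra.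
  right; split => i /=.
    have := gapi i; case/orP => h; apply/idP/idP => h'; lra.
  case: eqP => [-> | _]; first by rewrite ?eqxx ?andbF; apply/negbTE; have hc' := hc; lra.
  rewrite andbT; have := gapi i; case/orP => h; apply/idP/idP => h'; lra.
Qed.

Hypothesis hB : exists n, [/\ n != v, adj v n & z n <= z v].
Definition EGv := [rel i j | [&& adj i j, i != v, j != v, z i <= z v & z j <= z v]].
Hypothesis hA : forall n1 n2, n1 != v -> n2 != v -> adj v n1 -> adj v n2 ->
  z n1 <= z v -> z n2 <= z v -> connect EGv n1 n2.

Lemma sEGv : symmetric EGv.
Proof.
move=> a b /=; rewrite adjS.
by case: (a != v); case: (b != v); case: (z a <= z v); case: (z b <= z v);
  rewrite ?andbF ?andbT.
Qed.

Lemma EG_EGv i j : i != v -> j != v ->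
  connect [rel a b | [&& adj a b, z a <= z v & z b <= z v]] i j = connect EGv i j.
Proof.
have [n0 [n0v adjn0 zn0]] := hB.
move=> iv jv; apply/idP/idP.
  pose f x := if x == v then n0 else x.
  move/(conn_map (e' := EGv) (f := f)); rewrite /f (negPf iv) (negPf jv); apply.
  move=> x y /= /and3P [axy zx zy].
  case: (eqVneq x v) => [xv | xv]; case: (eqVneq y v) => [yv | yv].
  - exact: connect0.
  - apply: hA => //; by rewrite -xv.
  - rewrite (sym_connect_sym sEGv); apply: hA => //; by rewrite -yv adjS.
  - by apply: connect1; rewrite /= axy xv yv zx zy.
apply: connect_sub => a b /= /and5P [? ? ? ? ?]; apply: connect1.
by apply/and3P.
Qed.

Lemma rk_move s ss t ts :
  (forall i, in_level z (Some s) ss i -> in_level z t ts i) ->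
  (forall i, in_level z' (Some s) ss i -> in_level z' t ts i) ->
  rk adj z s ss t ts = rk adj z' s ss t ts.
Proof.
move=> mono mono'.
have [n0 [n0v adjn0 zn0]] := hB.
rewrite !rkE.
set Sz := [set i | in_level z (Some s) ss i].
set Sz' := [set i | in_level z' (Some s) ss i].
have [Tsame | [Tz Tz']] := lev_class t ts.
- have HE : level_rel adj z t ts =2 level_rel adj z' t ts.
    by move=> i j; rewrite /level_rel !Tsame.
  rewrite (cnt_eqrel _ HE).
  have [Ssame | [Sz1 Sz1']] := lev_class (Some s) ss.
    have SS : Sz = Sz' by apply/setP => i; rewrite !inE Ssame.
    by rewrite SS.
  have -> : Sz = v |: Sz'.
    apply/setP => i; rewrite !inE Sz1 Sz1'; case: eqVneq => [-> | _] /=;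
    by rewrite ?lexx ?andbT.
  rewrite (@cnt_add _ Sz' v n0) //; first exact: lrel_sym.
    by rewrite inE Sz1' zn0 n0v.
  have m1 : in_level z t ts v by apply: mono; rewrite Sz1.
  have m2 : in_level z t ts n0 by apply: mono; rewrite Sz1.
  by apply: connect1; rewrite /level_rel adjn0 -!Tsame m1 m2.
- have HE : level_rel adj z t ts =2 [rel a b | [&& adj a b, z a <= z v & z b <= z v]].
    by move=> i j; rewrite /level_rel !Tz.
  have HE' : level_rel adj z' t ts =2 EGv.
    by move=> i j; rewrite /level_rel !Tz' /= -!andbA; do !bool_congr.
  rewrite (cnt_eqrel _ HE) (cnt_eqrel _ HE').
  have symG : symmetric [rel a b | [&& adj a b, z a <= z v & z b <= z v]].
    move=> a b /=; rewrite adjS.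
    by case: (z a <= z v); case: (z b <= z v); rewrite ?andbF ?andbT.
  have [Ssame | [Sz1 Sz1']] := lev_class (Some s) ss.
    have SS : Sz = Sz' by apply/setP => i; rewrite !inE Ssame.
    rewrite SS; apply: cnt_ext; [done | exact: sEGv | move=> i j].
    rewrite /Sz' !inE => /mono' hi /mono' hj.
    apply: EG_EGv; [move: hi | move: hj]; by rewrite Tz' => /andP [].
  have -> : Sz = v |: Sz'.
    apply/setP => i; rewrite !inE Sz1 Sz1'; case: eqVneq => [-> | _] /=;
    by rewrite ?lexx ?andbT.
  rewrite (cnt_add (n := n0)) //; first last.
  + by apply: connect1; rewrite /= adjn0 zn0 lexx.
  + by rewrite inE Sz1' zn0 n0v.
  apply: cnt_ext; [done | exact: sEGv | move=> i j]; rewrite /Sz' !inE !Sz1' => /andP [_ iv] /andP [_ jv].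
  exact: EG_EGv.
Qed.

Lemma lvl_mono (y : 'I_N -> R) b x ss ts i : b < x ->
  in_level y (Some b) ss i -> in_level y (Some x) ts i.
Proof. by case: ss; case: ts => /= h1 h2; lra. Qed.

Lemma PH0_move : PH0 adj z = PH0 adj z'.
Proof.
apply: functional_extensionality => b; apply: functional_extensionality => d.
case: d => [x|] /=.
  case: ifP => // bx.
  by rewrite !(@rk_move b _ (Some x)) // => i; apply: lvl_mono.
by rewrite !(@rk_move b _ None).
Qed.

End Move.
End Real.

Section Desc.
Variables (R : realType) (N : nat) (adj : rel 'I_N).
Local Open Scope ring_scope.

Lemma exmin (z : 'I_N -> R) (P : pred 'I_N) w0 : P w0 ->
  exists w, P w /\ forall w', P w' -> z w <= z w'.
Proof.
move=> Pw0; case: (arg_minP z Pw0) => w Pw Hm.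
by exists w; split.
Qed.

Lemma exmax (z : 'I_N -> R) (P : pred 'I_N) w0 : P w0 ->
  exists w, P w /\ forall w', P w' -> z w' <= z w.
Proof.
move=> Pw0; case: (arg_maxP z Pw0) => w Pw Hm.
by exists w; split.
Qed.

Lemma rk_ext (z z' : 'I_N -> R) s ss t ts s' ss' t' ts' :
  (forall i, in_level z (Some s) ss i = in_level z' (Some s') ss' i) ->
  (forall i, in_level z t ts i = in_level z' t' ts' i) ->
  rk adj z s ss t ts = rk adj z' s' ss' t' ts'.
Proof.
move=> HS HT; rewrite !rkE.
have HE : level_rel adj z t ts =2 level_rel adj z' t' ts'.
  by move=> i j; rewrite /level_rel !HT.
rewrite (cnt_eqrel _ HE).
have -> : [set i | in_level z (Some s) ss i] = [set i | in_level z' (Some s') ss' i].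
  by apply/setP => i; rewrite !inE HS.
by [].
Qed.

Lemma rk_ext_t (z : 'I_N -> R) s ss t ts t' ts' :
  (forall i, in_level z t ts i = in_level z t' ts' i) ->
  rk adj z s ss t ts = rk adj z s ss t' ts'.
Proof. by move=> H; apply: rk_ext. Qed.

Lemma rk_ext_s (z : 'I_N -> R) s ss s' ss' t ts :
  (forall i, in_level z (Some s) ss i = in_level z (Some s') ss' i) ->
  rk adj z s ss t ts = rk adj z s' ss' t ts.
Proof. by move=> H; apply: rk_ext. Qed.

Definition fb (z : 'I_N -> R) (c : R) (t : option R) ts : int :=
  (rk adj z c false t ts)%:Z - (rk adj z c true t ts)%:Z.
Definition gd (z : 'I_N -> R) (c : R) (s : R) ss : int :=
  (rk adj z s ss (Some c) true)%:Z - (rk adj z s ss (Some c) false)%:Z.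
Definition after (x : R) (d : option R) := if d is Some y then x < y else true.

Lemma after_trans x y d : x < y -> after y d -> after x d.
Proof. by case: d => //= y' h1 h2; apply: lt_trans h1 h2. Qed.

Lemma birth_desc (z : 'I_N -> R) c :
  (forall b d, PH0 adj z b d <= 1) ->
  (forall d d', 0 < PH0 adj z c d -> 0 < PH0 adj z c d' -> d = d') ->
  forall x, c <= x -> fb z c (Some x) false <= 0 \/
    (fb z c (Some x) false = 1 /\ exists d, after x d /\ 0 < PH0 adj z c d).
Proof.
move=> T1 U.
suff H : forall (n : nat) (x : R), (#|[set w | (x < z w)%R]| <= n)%N -> c <= x ->
  fb z c (Some x) false <= 0 \/
    (fb z c (Some x) false = 1 /\ exists d, after x d /\ 0 < PH0 adj z c d).
  by move=> x; apply: (H _ x (leqnn _)).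
elim => [|n IH] x Hn cx;
  case: (boolP [exists w, x < z w]) => [/existsP [w0 Hw0] | /existsPn Hno].
- by move: Hn; rewrite leqn0 => /eqP/cards0_eq/setP/(_ w0); rewrite !inE Hw0.
- have -> : fb z c (Some x) false = PH0 adj z c None.
    rewrite /fb /PH0 !(@rk_ext_t z c _ (Some x) false None false) // => i /=;
    by rewrite leNgt Hno.
  have := T1 c None; case: (boolP (0 < PH0 adj z c None)) => hp h1.
    right; split; first lia.
    by exists None.
  left; lia.
- have [w [xw Hw]] := exmin z (P := fun w => x < z w) Hw0.
  have xy : x < z w by [].
  have cy : c < z w by apply: le_lt_trans cx xy.
  have E1 : fb z c (Some x) false = fb z c (Some (z w)) true.
    rewrite /fb !(@rk_ext_t z c _ (Some x) false (Some (z w)) true) // => i /=;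
    apply/idP/idP => h; first [exact: le_lt_trans h xy |
    rewrite leNgt; apply/negP => h'; have := Hw _ h'; rewrite leNgt h //].
  have E2 : PH0 adj z c (Some (z w)) = fb z c (Some (z w)) true - fb z c (Some (z w)) false.
    by rewrite /PH0 cy /fb; lia.
  have Hc : (#|[set w' | (z w < z w')%R]| <= n)%N.
    rewrite -ltnS; apply: leq_trans Hn; apply: proper_card; rewrite properE.
    apply/andP; split.
      by apply/subsetP => w'; rewrite !inE => h; apply: lt_trans xy h.
    apply/subsetPn; exists w; by rewrite !inE ?ltxx.
  have := IH _ Hc (le_trans cx (ltW xy)).
  have := T1 c (Some (z w)).
  rewrite E1; case: (boolP (0 < PH0 adj z c (Some (z w)))) => hp h1.
    case => [hF | [hF [d [ad pd]]]]; last first.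
      by have := U _ _ hp pd => Ed; move: ad; rewrite -Ed /= ltxx.
    case: (boolP (fb z c (Some (z w)) true <= 0)) => h2; first by left.
    right; split; first lia.
    by exists (Some (z w)).
  case => [hF | [hF [d [ad pd]]]]; first by left; lia.
  case: (boolP (fb z c (Some (z w)) true <= 0)) => h2; first by left.
  right; split; first lia.
  by exists d; split => //; apply: after_trans xy ad.
- have -> : fb z c (Some x) false = PH0 adj z c None.
    rewrite /fb /PH0 !(@rk_ext_t z c _ (Some x) false None false) // => i /=;
    by rewrite leNgt Hno.
  have := T1 c None; case: (boolP (0 < PH0 adj z c None)) => hp h1.
    right; split; first lia.
    by exists None.
  left; lia.
Qed.

Lemma rk_empty (z : 'I_N -> R) s ss t ts :
  (forall i, ~~ in_level z (Some s) ss i) -> rk adj z s ss t ts = 0%N.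
Proof.
move=> H; rewrite rkE.
have -> : [set i | in_level z (Some s) ss i] = set0.
  by apply/setP => i; rewrite !inE (negbTE (H i)).
by rewrite imset0 cards0.
Qed.

Lemma death_desc (z : 'I_N -> R) c :
  (forall b d, PH0 adj z b d <= 1) ->
  (forall b b', 0 < PH0 adj z b (Some c) -> 0 < PH0 adj z b' (Some c) -> b = b') ->
  forall x, x <= c -> gd z c x true <= 0 \/
    (gd z c x true = 1 /\ exists b, b < x /\ 0 < PH0 adj z b (Some c)).
Proof.
move=> T1 U.
suff H : forall (n : nat) (x : R), (#|[set w | (z w < x)%R]| <= n)%N -> x <= c ->
  gd z c x true <= 0 \/
    (gd z c x true = 1 /\ exists b, b < x /\ 0 < PH0 adj z b (Some c)).
  by move=> x; apply: (H _ x (leqnn _)).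
elim => [|n IH] x Hn cx;
  case: (boolP [exists w, z w < x]) => [/existsP [w0 Hw0] | /existsPn Hno].
- by move: Hn; rewrite leqn0 => /eqP/cards0_eq/setP/(_ w0); rewrite !inE Hw0.
- left; rewrite /gd !rk_empty //.
- have [w [xw Hw]] := exmax z (P := fun w => z w < x) Hw0.
  have xy : z w < x by [].
  have cy : z w < c by apply: lt_le_trans xy cx.
  have E1 : gd z c x true = gd z c (z w) false.
    rewrite /gd !(@rk_ext_s z x true (z w) false) // => i /=;
    apply/idP/idP => h; first [exact: le_lt_trans h xy |
    rewrite leNgt; apply/negP => h'; have := Hw _ h; rewrite leNgt h' //].
  have E2 : PH0 adj z (z w) (Some c) = gd z c (z w) false - gd z c (z w) true.
    by rewrite /PH0 cy /gd; lia.
  have Hc : (#|[set w' | (z w' < z w)%R]| <= n)%N.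
    rewrite -ltnS; apply: leq_trans Hn; apply: proper_card; rewrite properE.
    apply/andP; split.
      by apply/subsetP => w'; rewrite !inE => h; apply: lt_trans h xy.
    apply/subsetPn; exists w; by rewrite !inE ?ltxx.
  have := IH _ Hc (le_trans (ltW xy) cx).
  have := T1 (z w) (Some c).
  rewrite E1; case: (boolP (0 < PH0 adj z (z w) (Some c))) => hp h1.
    case => [hF | [hF [d [ad pd]]]]; last first.
      by have := U _ _ hp pd => Ed; move: ad; rewrite -Ed /= ltxx.
    case: (boolP (gd z c (z w) false <= 0)) => h2; first by left.
    right; split; first lia.
    by exists (z w).
  case => [hF | [hF [d [ad pd]]]]; first by left; lia.
  case: (boolP (gd z c (z w) false <= 0)) => h2; first by left.
  right; split; first lia.
  by exists d; split => //; apply: lt_trans ad xy.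
- left; rewrite /gd !rk_empty //.
Qed.

End Desc.

Section Events.
Variables (R : realType) (N : nat) (adj : rel 'I_N).
Local Open Scope ring_scope.

Lemma coords_head (b : R) d : b \in coords b d.
Proof. by rewrite /coords inE eqxx. Qed.

Lemma coords_Some (b c : R) : c \in coords b (Some c).
Proof. by rewrite /coords !inE eqxx orbT. Qed.

Lemma events (z : 'I_N -> R) c : typical_dgm (PH0 adj z) ->
  [/\ (rk adj z c false (Some c) false <= rk adj z c true (Some c) false + 1)%N,
      (rk adj z c true (Some c) true <= rk adj z c true (Some c) false + 1)%N &
      ~ ((rk adj z c true (Some c) false < rk adj z c false (Some c) false)%N /\
         (rk adj z c true (Some c) false < rk adj z c true (Some c) true)%N)].
Proof.
case=> T1 T2 T3.
have Ub : forall d d', 0 < PH0 adj z c d -> 0 < PH0 adj z c d' -> d = d'.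
  move=> d d' p p'; case: (eqVneq d d') => // dd.
  have ne : (c, d) <> (c, d') by case => E; rewrite E eqxx in dd.
  by have := T3 _ _ _ _ p p' ne c (coords_head c d); rewrite coords_head.
have Ud : forall b b', 0 < PH0 adj z b (Some c) -> 0 < PH0 adj z b' (Some c) -> b = b'.
  move=> b b' p p'; case: (eqVneq b b') => // bb.
  have ne : (b, Some c) <> (b', Some c) by case => E; rewrite E eqxx in bb.
  by have := T3 _ _ _ _ p p' ne c (coords_Some b c); rewrite coords_Some.
have := birth_desc T1 Ub (lexx c); rewrite /fb => hb.
have := death_desc T1 Ud (lexx c); rewrite /gd => hd.
set A := rk adj z c false (Some c) false in hb hd *.
set B := rk adj z c true (Some c) false in hb hd *.
set C := rk adj z c true (Some c) true in hb hd *.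
split.
- case: hb => [h | [h _]]; lia.
- case: hd => [h | [h _]]; lia.
- case => h1 h2.
  case: hb => [h | [_ [d [ad pd]]]]; first lia.
  case: hd => [h | [_ [b [bc pb]]]]; first lia.
  have ne : (c, d) <> (b, Some c).
    by case => E _; move: bc; rewrite E ltxx.
  by have := T3 _ _ _ _ pd pb ne c (coords_head c d); rewrite coords_Some.
Qed.
End Events.

Section Exist.
Variables (R : realType) (N : nat) (adj : rel 'I_N).
Hypothesis adjS : symmetric adj.
Local Open Scope ring_scope.

Definition upC (z : 'I_N -> R) w :=
  (exists n, [/\ n != w, adj w n & z n <= z w]) /\
  (forall n1 n2, n1 != w -> n2 != w -> adj w n1 -> adj w n2 ->
     z n1 <= z w -> z n2 <= z w -> connect (EGv adj z w) n1 n2).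

Definition downC (z : 'I_N -> R) w :=
  (exists n, adj w n /\ z n < z w) /\
  (forall n1 n2, adj w n1 -> adj w n2 -> z n1 < z w -> z n2 < z w ->
     connect (level_rel adj z (Some (z w)) true) n1 n2).

Lemma conn_le (z : 'I_N -> R) c x y : connect (level_rel adj z (Some c) false) x y ->
  z x <= c -> z y <= c.
Proof.
move=> cxy zx; apply/negPn/negP => zy.
have [a [b [_ nb /and3P [_ _ hb]]]] := edge_out (P := fun i => z i <= c) cxy zx zy.
by move: hb nb => /= ->.
Qed.

Lemma conn_lt (z : 'I_N -> R) c x y : connect (level_rel adj z (Some c) true) x y ->
  z x < c -> z y < c.
Proof.
move=> cxy zx; apply/negPn/negP => zy.
have [a [b [_ nb /and3P [_ _ hb]]]] := edge_out (P := fun i => z i < c) cxy zx zy.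
by move: hb nb => /= ->.
Qed.

Lemma EL_EG (z : 'I_N -> R) c x y : connect (level_rel adj z (Some c) true) x y ->
  connect (level_rel adj z (Some c) false) x y.
Proof.
apply: connect_sub => a b /and3P [h1 h2 h3]; apply: connect1.
by rewrite /level_rel /= h1 (ltW h2) (ltW h3).
Qed.

Lemma up_from (z : 'I_N -> R) w (Q : {set 'I_N}) r :
  (forall x y, level_rel adj z (Some (z w)) false x y -> x \in Q -> y \in Q) ->
  w \in Q -> r \in Q :\ w ->
  (forall x, x \in Q :\ w -> connect (restr (level_rel adj z (Some (z w)) false) (Q :\ w)) r x) ->
  (exists2 n, n \in Q :\ w & level_rel adj z (Some (z w)) false w n) ->
  upC z w.
Proof.
move=> clQ wQ rQ HQ [n nQ /and3P [awn _ zn]].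
split.
  by exists n; split => //; move: nQ; rewrite !inE => /andP [].
have sub : forall a b, connect (restr (level_rel adj z (Some (z w)) false) (Q :\ w)) a b ->
    connect (EGv adj z w) a b.
  apply: connect_sub => a b; rewrite restrE !inE => /and3P [/and3P [h1 h2 h3] /andP [h4 _] /andP [h5 _]].
  by move: h2 h3 => /= h2 h3; apply: connect1; rewrite /= h1 h2 h3 h4 h5.
have reach : forall m, m != w -> adj w m -> z m <= z w -> connect (EGv adj z w) r m.
  move=> m mw awm zm; apply: sub; apply: HQ; rewrite !inE mw /=.
  by apply: clQ wQ; rewrite /level_rel /= awm zm lexx.
move=> n1 n2 n1w n2w a1 a2 z1 z2.
apply: connect_trans (reach _ n2w a2 z2).
by rewrite (sym_connect_sym (sEGv adjS z w)); apply: reach.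
Qed.

Lemma delta_gen (e e' : rel 'I_N) (S : {set 'I_N}) (K : {set {set 'I_N}}) :
  symmetric e -> symmetric e' -> (forall x y, connect e x y -> connect e' x y) ->
  K \subset comp e @: S ->
  (forall k, k \in K -> exists a b, [/\ a \in S, b \in S, comp e a \notin K,
      comp e b = k & connect e' a b]) ->
  (#|comp e' @: S| + #|K| <= #|comp e @: S|)%N.
Proof.
move=> se se' sub KS HK; apply: card_ker => //.
  move=> i j iS jS /eqP; rewrite comp_eq // => /sub.
  by rewrite -comp_eq // => /eqP.
move=> k kK; have [a [b [aS bS aK bk ab]]] := HK k kK.
by exists a, b; split => //; apply/eqP; rewrite comp_eq.
Qed.

Lemma lrel_le (z : 'I_N -> R) c i j :
  level_rel adj z (Some c) false i j = [&& adj i j, z i <= c & z j <= c].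
Proof. by []. Qed.
Lemma lrel_lt (z : 'I_N -> R) c i j :
  level_rel adj z (Some c) true i j = [&& adj i j, z i < c & z j < c].
Proof. by []. Qed.

Lemma delta1 (z : 'I_N -> R) c a b : z a < c -> z b < c ->
  ~~ connect (level_rel adj z (Some c) true) a b ->
  connect (level_rel adj z (Some c) false) a b ->
  (rk adj z c true (Some c) false + 1 <= rk adj z c true (Some c) true)%N.
Proof.
move=> za zb nab ab; rewrite !rkE.
have sEL : symmetric (level_rel adj z (Some c) true) by apply: lrel_sym.
have := @delta_gen (level_rel adj z (Some c) true) (level_rel adj z (Some c) false)
  [set i | in_level z (Some c) true i] [set comp (level_rel adj z (Some c) true) b]
  (lrel_sym adjS _ _ _) (lrel_sym adjS _ _ _) (@EL_EG z c).
rewrite cards1; apply.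
  by rewrite sub1set; apply: imset_f; rewrite inE.
move=> k; rewrite inE => /eqP ->; exists a, b; split => //; rewrite ?inE //.
by rewrite comp_eq.
Qed.

Lemma delta2 (z : 'I_N -> R) c a1 b1 a2 b2 :
  z a1 < c -> z b1 < c -> z a2 < c -> z b2 < c ->
  ~~ connect (level_rel adj z (Some c) true) b1 b2 ->
  ~~ connect (level_rel adj z (Some c) true) a1 b1 ->
  ~~ connect (level_rel adj z (Some c) true) a1 b2 ->
  ~~ connect (level_rel adj z (Some c) true) a2 b1 ->
  ~~ connect (level_rel adj z (Some c) true) a2 b2 ->
  connect (level_rel adj z (Some c) false) a1 b1 ->
  connect (level_rel adj z (Some c) false) a2 b2 ->
  (rk adj z c true (Some c) false + 2 <= rk adj z c true (Some c) true)%N.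
Proof.
move=> za1 zb1 za2 zb2 n12 n11 n12' n21 n22 c1 c2; rewrite !rkE.
set EL := level_rel adj z (Some c) true.
have sEL : symmetric EL by apply: lrel_sym.
have := @delta_gen EL (level_rel adj z (Some c) false)
  [set i | in_level z (Some c) true i] [set comp EL b1; comp EL b2]
  sEL (lrel_sym adjS _ _ _) (@EL_EG z c).
rewrite cards2 comp_eq // n12 /=; apply.
  by rewrite subUset !sub1set !imset_f ?inE.
move=> k; rewrite !inE => /orP [] /eqP ->.
  exists a1, b1; split; rewrite ?inE //.
  by rewrite !comp_eq // negb_or n11 n12'.
exists a2, b2; split; rewrite ?inE //.
by rewrite !comp_eq // negb_or n21 n22.
Qed.

Lemma beta2 (z : 'I_N -> R) c x y : z x <= c -> z y <= c ->
  (forall l, z l < c -> ~~ connect (level_rel adj z (Some c) false) x l) ->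
  (forall l, z l < c -> ~~ connect (level_rel adj z (Some c) false) y l) ->
  ~~ connect (level_rel adj z (Some c) false) x y ->
  (rk adj z c true (Some c) false + 2 <= rk adj z c false (Some c) false)%N.
Proof.
move=> zx zy hx hy nxy; rewrite !rkE.
set EG := level_rel adj z (Some c) false.
have sEG : symmetric EG by apply: lrel_sym.
set Y := [set comp EG i | i in [set i | in_level z (Some c) false i]].
set X := [set comp EG i | i in [set i | in_level z (Some c) true i]].
have xY : comp EG x \in Y by apply: imset_f; rewrite inE.
have yY : comp EG y \in Y by apply: imset_f; rewrite inE.
have sub : X \subset Y :\ comp EG x :\ comp EG y.
  apply/subsetP => k /imsetP [l]; rewrite inE /= => zl ->.
  rewrite !inE; apply/and3P; split.
  - by rewrite comp_eq // (sym_connect_sym sEG) hy.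
  - by rewrite comp_eq // (sym_connect_sym sEG) hx.
  - by apply: imset_f; rewrite inE /=; apply: ltW.
have := subset_leq_card sub.
rewrite (cardsD1 (comp EG x) Y) xY.
rewrite (cardsD1 (comp EG y) (Y :\ comp EG x)) !inE yY comp_eq // (sym_connect_sym sEG) nxy /=.
by move=> h; rewrite addn2 !add1n !ltnS in h *.
Qed.

Lemma beta0 (z : 'I_N -> R) c :
  (rk adj z c false (Some c) false <= rk adj z c true (Some c) false)%N ->
  forall x, z x <= c -> exists l, z l < c /\ connect (level_rel adj z (Some c) false) x l.
Proof.
rewrite !rkE => H x zx.
set EG := level_rel adj z (Some c) false.
have sEG : symmetric EG by apply: lrel_sym.
set Y := [set comp EG i | i in [set i | in_level z (Some c) false i]].
set X := [set comp EG i | i in [set i | in_level z (Some c) true i]].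
have XY : X \subset Y.
  apply/subsetP => k /imsetP [l]; rewrite inE /= => zl ->.
  by apply: imset_f; rewrite inE /=; apply: ltW.
have /eqP EXY : X == Y by rewrite eqEcard XY.
have : comp EG x \in X by rewrite EXY; apply: imset_f; rewrite inE.
case/imsetP => l; rewrite inE /= => zl /eqP.
by rewrite comp_eq // => cxl; exists l.
Qed.

Lemma comp_closed (e : rel 'I_N) r x y : e x y -> x \in comp e r -> y \in comp e r.
Proof. by rewrite !inE => exy crx; apply: connect_trans crx (connect1 exy). Qed.

Lemma comp_restr (e : rel 'I_N) r x : x \in comp e r ->
  connect (restr e (comp e r)) r x.
Proof.
rewrite inE => crx; apply: conn_closed_restr => //.
  by move=> a b eab; apply: comp_closed.
by rewrite inE connect0.
Qed.

Lemma exists_move (z : 'I_N -> R) v1 v2 : v1 != v2 -> z v1 = z v2 ->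
  typical_dgm (PH0 adj z) ->
  exists w, (exists w', w' != w /\ z w' = z w) /\ (upC z w \/ downC z w).
Proof.
move=> v12 zv12 typ.
set c := z v1.
have zv2 : z v2 = c by rewrite -zv12.
have [F1 F2 F3] := @events _ _ adj z c typ.
set EG := level_rel adj z (Some c) false.
set EL := level_rel adj z (Some c) true.
have sEG : symmetric EG by apply: lrel_sym.
have sEL : symmetric EL by apply: lrel_sym.
have partner : forall w, z w = c -> exists w', w' != w /\ z w' = z w.
  move=> w zw; case: (eqVneq w v1) => [-> | wv1].
    by exists v2; rewrite eq_sym v12 zv2.
  by exists v1; rewrite eq_sym wv1 zw.
case: (classic (exists w, z w = c /\ downC z w)) => [[w [zw dw]] | Hnd].
  by exists w; split; [apply: partner | right].
have Hnd' : forall w, z w = c -> ~ downC z w by move=> w zw dw; apply: Hnd; exists w.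
have EGle : forall x y, connect EG x y -> z x <= c -> z y <= c.
  by move=> x y; apply: conn_le.
have up_w : forall w (Q : {set 'I_N}) r, z w = c ->
    (forall x y, EG x y -> x \in Q -> y \in Q) -> w \in Q -> r \in Q :\ w ->
    (forall x, x \in Q :\ w -> connect (restr EG (Q :\ w)) r x) ->
    (exists2 n, n \in Q :\ w & EG w n) ->
    exists w, (exists w', w' != w /\ z w' = z w) /\ (upC z w \/ downC z w).
  move=> w Q r zw h1 h2 h3 h4 h5; exists w; split; first exact: partner.
  by left; apply: (@up_from z w Q r); rewrite ?zw.
case: (classic (exists w a, [/\ z w = c, adj w a & z a < c]))
  => [[w0 [a [zw0 aw0 za]]] | HnoL].
-
  have [b [zb [bw0 nab]]] : exists b, [/\ z b < c, adj w0 b & ~~ connect EL a b].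
    have nd := Hnd' _ zw0; rewrite /downC zw0 in nd.
    apply: NNPP => nb; apply: nd; split; first by exists a.
    have key : forall n, adj w0 n -> z n < c -> connect EL a n.
      by move=> n an zn; apply/negPn/negP => h; apply: nb; exists n.
    move=> n1 n2 a1 a2 z1 z2.
    apply: connect_trans (key _ a2 z2).
    by rewrite (sym_connect_sym sEL); apply: key.
  have EGw0a : EG w0 a by rewrite /EG lrel_le aw0 zw0 lexx ltW.
  have EGw0b : EG w0 b by rewrite /EG lrel_le bw0 zw0 lexx ltW.
  have cw0a : connect EG w0 a := connect1 EGw0a.
  have cw0b : connect EG w0 b := connect1 EGw0b.
  have cab : connect EG a b.
    by apply: connect_trans cw0b; rewrite (sym_connect_sym sEG).
  have D1 := delta1 za zb nab cab.
  have AB : (rk adj z c false (Some c) false <= rk adj z c true (Some c) false)%N.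
    rewrite leqNgt; apply/negP => h; apply: F3; split => //.
    by apply: leq_trans D1; rewrite addn1.
  have B0 := beta0 AB.
  pose vs := if w0 == v1 then v2 else v1.
  have vsw0 : vs != w0.
    by rewrite /vs; case: (eqVneq w0 v1) => [-> | h]; rewrite // eq_sym.
  have zvs : z vs = c by rewrite /vs; case: ifP.
  have symc : forall x y, connect EG x y = connect EG y x.
    by move=> x y; rewrite (sym_connect_sym sEG).
  case: (boolP (connect EG vs w0)) => cvw.
  +
    pose Q := comp EG w0.
    pose C0 := comp EL a :|: comp EL b :|: [set w0].
    have w0Q : w0 \in Q by rewrite inE connect0.
    have clQ : forall x y, EG x y -> x \in Q -> y \in Q by move=> x y; apply: comp_closed.
    have inQ : forall x, (x \in Q) = connect EG w0 x by move=> x; rewrite inE.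
    have w0C : w0 \in C0 by rewrite !inE eqxx orbT.
    have C0Q : C0 \subset Q.
      apply/subsetP => x; rewrite !inE => /orP [/orP [h | h] | /eqP ->].
      - exact: connect_trans cw0a (EL_EG h).
      - exact: connect_trans cw0b (EL_EG h).
      - exact: connect0.
    have liftL : forall r, EG w0 r -> comp EL r \subset C0 ->
        forall x, connect EL r x -> connect (restr EG C0) w0 x.
      move=> r er sub x crx.
      have rx : x \in comp EL r by rewrite inE.
      have h := comp_restr rx.
      apply: (@connect_trans _ _ r).
        by apply: connect1; rewrite restrE er w0C (subsetP sub r) // inE connect0.
      move: h; apply: connect_sub => p q; rewrite restrE => /and3P [epq pC qC].
      apply: connect1; rewrite restrE (subsetP sub _ pC) (subsetP sub _ qC) !andbT.
      by move: epq; rewrite /EL lrel_lt /EG lrel_le => /and3P [-> /ltW -> /ltW ->].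
    have HC : forall x, x \in C0 -> connect (restr EG C0) w0 x.
      move=> x; rewrite !inE => /orP [/orP [h | h] | /eqP ->]; last exact: connect0.
      - apply: (liftL a) => //.
        exact: subset_trans (subsetUl _ (comp EL b)) (subsetUl _ _).
      - apply: (liftL b) => //.
        exact: subset_trans (subsetUr (comp EL a) _) (subsetUl _ _).
    have HQ : forall x, x \in Q -> connect (restr EG Q) w0 x by move=> x; apply: comp_restr.
    have vsQC : vs \in Q :\: C0.
      rewrite inE inQ symc cvw andbT !inE (negbTE vsw0) orbF.
      apply/norP; split; apply/negP => /conn_lt h; [move: (h za) | move: (h zb)];
      by rewrite zvs ltxx.
    case E : #|Q :\: C0| => [|n].
      by move/cards0_eq: E => E; rewrite E inE in vsQC.
    have [w [wQC HQw [n' n'Q ewn]]] := ma sEG E C0Q w0C HC HQ.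
    move: wQC; rewrite inE => /andP [wC0 wQ].
    have wQ' := wQ; rewrite inQ in wQ.
    have zwle : z w <= c by apply: (EGle w0) wQ _; rewrite zw0.
    have zw : z w = c.
      apply/eqP; rewrite eq_le zwle /= leNgt; apply/negP => zwc.
      move: wC0; rewrite !inE !negb_or => /andP [/andP [naw nbw] _].
      have caw : connect EG a w by apply: connect_trans wQ; rewrite symc.
      have := delta2 za zb za zwc nbw nab naw nab naw cab caw.
      by move=> h; have := leq_trans h F2; rewrite leq_add2l.
    apply: (up_w w Q w0) => //; last by exists n'.
    all: rewrite ?inQ //.
    rewrite !inE connect0 andbT; apply/eqP => E0; by move: w0C; rewrite E0 (negbTE wC0).
  +
    have zvsle : z vs <= c by rewrite zvs lexx.
    have [l [zl cvl]] := B0 vs zvsle.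
    pose Q := comp EG vs.
    pose C0 := comp EL l.
    have inQ : forall x, (x \in Q) = connect EG vs x by move=> x; rewrite inE.
    have lQ : l \in Q by rewrite inQ.
    have clQ : forall x y, EG x y -> x \in Q -> y \in Q by move=> x y; apply: comp_closed.
    have C0Q : C0 \subset Q.
      by apply/subsetP => x; rewrite inE inQ => h; apply: connect_trans cvl (EL_EG h).
    have lC0 : l \in C0 by rewrite inE connect0.
    have HC : forall x, x \in C0 -> connect (restr EG C0) l x.
      move=> x xC; have := comp_restr xC; apply: connect_sub => p q.
      rewrite restrE => /and3P [epq pC qC]; apply: connect1.
      rewrite restrE pC qC !andbT.
      by move: epq; rewrite /EL lrel_lt /EG lrel_le => /and3P [-> /ltW -> /ltW ->].
    have QE : Q = comp EG l by apply/eqP; rewrite comp_eq // symc.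
    have HQ : forall x, x \in Q -> connect (restr EG Q) l x.
      by move=> x; rewrite QE; apply: comp_restr.
    have vsQC : vs \in Q :\: C0.
      rewrite inE inQ connect0 andbT inE; apply/negP => /conn_lt h.
      by move: (h zl); rewrite zvs ltxx.
    case E : #|Q :\: C0| => [|n].
      by move/cards0_eq: E => E; rewrite E inE in vsQC.
    have [w [wQC HQw [n' n'Q ewn]]] := ma sEG E C0Q lC0 HC HQ.
    move: wQC; rewrite inE => /andP [wC0 wQ].
    rewrite inQ in wQ.
    have zwle : z w <= c by apply: (EGle vs) => //; rewrite zvs.
    have zw : z w = c.
      apply/eqP; rewrite eq_le zwle /= leNgt; apply/negP => zwc.
      rewrite inE in wC0.
      have nwb : ~~ connect EL w b.
        apply/negP => h; move/negP: cvw; apply.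
        apply: connect_trans wQ _; apply: connect_trans (EL_EG h) _; by rewrite symc.
      have nlb : ~~ connect EL l b.
        apply/negP => h; move/negP: cvw; apply.
        apply: connect_trans cvl _; apply: connect_trans (EL_EG h) _; by rewrite symc.
      have naw : ~~ connect EL a w.
        apply/negP => h; move/negP: cvw; apply.
        apply: connect_trans wQ _; apply: (@connect_trans _ _ a); last by rewrite symc.
        by rewrite symc; apply: EL_EG.
      have clw : connect EG l w by apply: connect_trans wQ; rewrite symc.
      have := delta2 zl zwc za zb nwb wC0 nlb naw nab clw cab.
      by move=> h; have := leq_trans h F2; rewrite leq_add2l.
    have wQQ : w \in Q by rewrite inQ.
    apply: (up_w w Q l) => //; last by exists n'.
    rewrite !inE -inQ lQ andbT; apply/eqP => E0; by move: lC0; rewrite E0 (negbTE wC0).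
-
  have clV : forall x y, connect EG x y -> z x = c -> z y = c.
    move=> x y cxy zx; apply/eqP/negPn/negP => zy.
    have [p [q [zp zq epq]]] := edge_out (P := fun i => z i == c) cxy (introT eqP zx) zy.
    move: zp zq => /= /eqP zp zq.
    move: epq; rewrite /EG lrel_le => /and3P [apq _ zq'].
    apply: HnoL; exists p, q; split => //.
    by rewrite lt_neqAle zq' andbT.
  have noL : forall x, z x = c -> forall l, z l < c -> ~~ connect EG x l.
    move=> x zx l zl; apply/negP => h; have E := clV _ _ h zx.
    by rewrite E ltxx in zl.
  have cv12 : connect EG v1 v2.
    apply/negPn/negP => n12.
    have zv2le : z v2 <= c by rewrite zv2 lexx.
    have := @beta2 z c v1 v2 (lexx c) zv2le (noL v1 erefl) (noL v2 zv2) n12.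
    by move=> h; have := leq_trans h F1; rewrite leq_add2l.
  pose Q := comp EG v1.
  pose C0 := [set v1].
  have inQ : forall x, (x \in Q) = connect EG v1 x by move=> x; rewrite inE.
  have v1Q : v1 \in Q by rewrite inQ connect0.
  have clQ : forall x y, EG x y -> x \in Q -> y \in Q by move=> x y; apply: comp_closed.
  have C0Q : C0 \subset Q by rewrite sub1set.
  have v1C : v1 \in C0 by rewrite inE.
  have HC : forall x, x \in C0 -> connect (restr EG C0) v1 x.
    by move=> x; rewrite inE => /eqP ->; apply: connect0.
  have HQ : forall x, x \in Q -> connect (restr EG Q) v1 x by move=> x; apply: comp_restr.
  have v2QC : v2 \in Q :\: C0 by rewrite !inE eq_sym v12 cv12.
  case E : #|Q :\: C0| => [|n].
    by move/cards0_eq: E => E; rewrite E inE in v2QC.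
  have [w [wQC HQw [n' n'Q ewn]]] := ma sEG E C0Q v1C HC HQ.
  move: wQC; rewrite !inE => /andP [wv1 wQ].
  have zw : z w = c by apply: clV wQ _.
  have wQQ : w \in Q by rewrite inQ.
  apply: (up_w w Q v1) => //; last by exists n'.
  by rewrite !inE connect0 andbT eq_sym.
Qed.

End Exist.

Section Final.
Variables (R : realType) (N : nat).
Local Open Scope ring_scope.

Lemma gap_up_seq (s : seq R) (c : R) :
  exists c', c < c' /\ forall y, y \in s -> ~~ ((c < y) && (y <= c')).
Proof.
elim: s => [|y s [c0 [cc0 H]]].
  by exists (c + 1); split => //; lra.
case: (boolP (c < y)) => cy.
  case: (boolP (c0 <= (c + y) / 2)) => hc.
    exists c0; split => // y'; rewrite inE => /orP [/eqP -> | /H //].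
    apply/negP => /andP [h1 h2]; lra.
  exists ((c + y) / 2); split; first lra.
  move=> y'; rewrite inE => /orP [/eqP -> | yy].
    apply/negP => /andP [h1 h2]; lra.
  apply/negP => /andP [h1 h2]; have := H _ yy; rewrite h1 /= => h3; lra.
exists c0; split => // y'; rewrite inE => /orP [/eqP -> | /H //].
by rewrite (negbTE cy).
Qed.

Lemma gap_down_seq (s : seq R) (c : R) :
  exists c', c' < c /\ forall y, y \in s -> ~~ ((c' <= y) && (y < c)).
Proof.
elim: s => [|y s [c0 [cc0 H]]].
  by exists (c - 1); split => //; lra.
case: (boolP (y < c)) => cy.
  case: (boolP ((c + y) / 2 <= c0)) => hc.
    exists c0; split => // y'; rewrite inE => /orP [/eqP -> | /H //].
    apply/negP => /andP [h1 h2]; lra.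
  exists ((c + y) / 2); split; first lra.
  move=> y'; rewrite inE => /orP [/eqP -> | yy].
    apply/negP => /andP [h1 h2]; lra.
  apply/negP => /andP [h1 h2]; have := H _ yy; rewrite h2 andbT => h3; lra.
exists c0; split => // y'; rewrite inE => /orP [/eqP -> | /H //].
by rewrite (negbTE cy) andbF.
Qed.

Definition meas (z : 'I_N -> R) :=
  #|[set p : 'I_N * 'I_N | (p.1 != p.2) && (z p.1 == z p.2)]|.

Lemma meas_upd (z : 'I_N -> R) w w' c' : w' != w -> z w' = z w ->
  (forall x, x != w -> z x != c') -> (meas (upd z w c') < meas z)%N.
Proof.
move=> ww' zww' fresh; apply: proper_card; rewrite properE; apply/andP; split.
  apply/subsetP => [[p1 p2]]; rewrite !inE /upd /=.
  case: (eqVneq p1 w) => [-> | p1w]; case: (eqVneq p2 w) => [-> | p2w] //=.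
  - by move=> /eqP E; move: (fresh _ p2w); rewrite -E eqxx.
  - by move=> /andP [_ /eqP E]; move: (fresh _ p1w); rewrite E eqxx.
apply/subsetPn; exists (w', w); rewrite !inE /=.
  by rewrite ww' zww' eqxx.
by rewrite ww' /upd eqxx (negbTE ww') fresh.
Qed.

End Final.

Section Main.
Variables (R : realType) (N : nat) (adj : rel 'I_N).
Hypothesis adjS : symmetric adj.
Local Open Scope ring_scope.

Lemma step (z : 'I_N -> R) v1 v2 : v1 != v2 -> z v1 = z v2 ->
  typical_dgm (PH0 adj z) ->
  exists z'', PH0 adj z'' = PH0 adj z /\ (meas z'' < meas z)%N.
Proof.
move=> v12 zv typ.
have [w [[w' [ww' zw']] [up | down]]] := exists_move adjS v12 zv typ.
- have [c' [hc H]] := gap_up_seq [seq z i | i <- enum 'I_N] (z w).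
  have Hx : forall x, ~~ ((z w < z x) && (z x <= c')).
    by move=> x; apply: H; apply: map_f; rewrite mem_enum.
  exists (upd z w c'); split.
    case: up => hB hA; symmetry; apply: PH0_move => // x.
    apply/negP => /andP [h1 h2]; move/negP: (Hx x); apply; by rewrite h1 ltW.
  apply: meas_upd ww' zw' _ => x xw; apply/negP => /eqP E.
  by move/negP: (Hx x); apply; rewrite E lexx hc.
- have [c' [hc H]] := gap_down_seq [seq z i | i <- enum 'I_N] (z w).
  have Hx : forall x, ~~ ((c' <= z x) && (z x < z w)).
    by move=> x; apply: H; apply: map_f; rewrite mem_enum.
  have below : forall x, z x < z w -> z x < c'.
    move=> x h; rewrite ltNge; apply/negP => h'; move/negP: (Hx x); apply.
    by rewrite h h'.
  pose y := upd z w c'.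
  have yw : y w = c' by rewrite /y /upd eqxx.
  have yx : forall x, x != w -> y x = z x by move=> x xw; rewrite /y /upd (negbTE xw).
  case: down => [[n [awn zn]] dA].
  have nw : n != w by apply/eqP => E; rewrite E ltxx in zn.
  have E : PH0 adj y = PH0 adj (upd y w (z w)).
    apply: PH0_move => //.
    - by rewrite yw.
    - move=> x; case: (eqVneq x w) => [-> | xw]; first by rewrite ltxx.
      rewrite yw (yx _ xw); apply/negP => /andP [h1 h2]; move/negP: (Hx x); apply.
      by rewrite h2 (ltW h1).
    - by exists n; split => //; rewrite yw (yx _ nw); apply: ltW; apply: below.
    - move=> n1 n2 n1w n2w a1 a2 z1 z2.
      have z1' : z n1 < z w by move: z1; rewrite yw (yx _ n1w) => h; apply: le_lt_trans h hc.
      have z2' : z n2 < z w by move: z2; rewrite yw (yx _ n2w) => h; apply: le_lt_trans h hc.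
      have := dA _ _ a1 a2 z1' z2'; apply: connect_sub => p q /and3P [apq zp zq].
      apply: connect1.
      have pw : p != w by apply/eqP => Ep; move: zp; rewrite Ep /= ltxx.
      have qw : q != w by apply/eqP => Eq; move: zq; rewrite Eq /= ltxx.
      rewrite /= apq pw qw yw (yx _ pw) (yx _ qw) /=.
      by rewrite !ltW //; apply: below.
  have Ey : upd y w (z w) = z.
    apply: functional_extensionality => i; rewrite /upd /y /upd.
    by case: eqP => [-> | ].
  exists y; split; first by rewrite E Ey.
  apply: meas_upd ww' zw' _ => x xw; apply/negP => /eqP Ex.
  by move/negP: (Hx x); apply; rewrite Ex lexx hc.
Qed.

Lemma main_ind : forall n (z : 'I_N -> R), (meas z < n)%N -> typical_dgm (PH0 adj z) ->
  exists z' : 'I_N -> R, typical_pt z' /\ PH0 adj z' = PH0 adj z.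
Proof.
elim => [|n IH] z // mz typ.
case: (classic (injective z)) => [inj | ninj].
  by exists z.
have [v1 [v2 [zv v12]]] : exists v1 v2, z v1 = z v2 /\ v1 != v2.
  apply: NNPP => H; apply: ninj => v1 v2 zv; apply/eqP/negPn/negP => v12.
  by apply: H; exists v1, v2.
have [z'' [E mz'']] := step v12 zv typ.
have typ'' : typical_dgm (PH0 adj z'') by rewrite E.
have [z' [tz' E']] := IH z'' (leq_trans mz'' mz) typ''.
by exists z'; rewrite E' E.
Qed.

End Main.

Lemma adj_sym (N : nat) (adj : rel 'I_N) : is_ngon adj \/ star_like adj -> symmetric adj.
Proof.
case => [[_ ->] | [c [bs [_ _ _ _ Hadj]]]].
  by move=> i j; rewrite /ngon_adj orbC.
move=> i j; rewrite !Hadj; apply: eq_has => b /=; by rewrite orbC.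
Qed.

Unset Implicit Arguments.
Local Open Scope ring_scope.

Theorem lemma1p1 (R : realType) (N : nat) (adj : rel 'I_N) (z : 'I_N -> R) :
  (is_ngon adj \/ star_like adj) ->
  typical_dgm (PH0 adj z) ->
  exists z' : 'I_N -> R, typical_pt z' /\ PH0 adj z' = PH0 adj z.
Proof.
move=> Hadj typ.
exact: (main_ind (adj_sym Hadj) (leqnn (meas z).+1) typ).
Qed.
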